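(* Let $R,S,T\in\mathcal{L}$ with $R\le_\ell T$ and let $\epsilon\ge0$. If there exist nonzero morphisms $k_R\to k_S(\epsilon)$ and $k_S\to k_T(\epsilon)$, then $k_S$ is $\Lambda_\epsilon$-interleaved with $k_R$ or with $k_T$.
   Context: Let $k$ be a field. The bipath poset $B$ has underlying set $(\mathbb{R}\times\{1,2\})\sqcup\{-\infty,+\infty\}$. Its order is: $x\le y$ iff $x=-\infty$, or $y=+\infty$, or $x=(s,i)$, $y=(t,i)$ with the same $i$ and $s\le t$. An interval is a nonempty convex and connected subset. $k_I$ is the interval module (functor $B\to$ $k$-vector spaces, $k$ on $I$ and $0$ elsewhere, identity maps within $I$, zero maps otherwise). For $\epsilon\ge0$, $\Lambda_\epsilon$ sends $(r,i)\mapsto(r+\epsilon,i)$ and fixes $\pm\infty$. Then: - $V(\epsilon)_b=V_{\Lambda_\epsilon b}$ and $V(\epsilon)(b,b')=V(\Lambda_\epsilon b,\Lambda_\epsilon b')$; $\phi(\epsilon)$ has components $\phi_{\Lambda_\epsilon b}$; - $V_{0\to\epsilon}$ has components $V(b,\Lambda_\epsilon b)$; - $V,W$ are $\Lambda_\epsilon$-interleaved if there are $\alpha\colon V\to W(\epsilon)$, $\beta\colon W\to V(\epsilon)$ with $\beta(\epsilon)\alpha=V_{0\to2\epsilon}$ and $\alpha(\epsilon)\beta=W_{0\to2\epsilon}$. Decorated numbers: $\overline{\mathbb{R}}^*=\{r^+,r^-: r\in\mathbb{R}\cup\{\pm\infty\}\}$ with total order $s^\sigma\le_* t^\tau$ iff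 $s<t$, or $s=t$ and $(\sigma,\tau)\in\{(-,-),(-,+),(+,+)\}$. Let $\mathbb{R}^*=\{r^\pm:r\in\mathbb{R}\}$. For $s^\sigma,t^\tau\in\mathbb{R}^*$, $s^\sigma+t^\tau$ is $(s+t)^+$ if $\sigma=\tau=+$ and $(s+t)^-$ otherwise. $\mathcal{L}$ is the set of intervals $\neq B$ containing $-\infty$. Each is uniquely $$\langle s^\sigma,t^\tau\rangle_{\mathcal{L}}=\{-\infty\}\cup\{(r,1):r^+\le_* t^\tau\}\cup\{(r,2):r^+\le_* s^\sigma\}$$ with $s^\sigma,t^\tau\in\mathbb{R}^*\cup\{-\infty^+,+\infty^-\}$. Partition of $\mathcal{L}$: - $\mathcal{L}_1$: both entries $-\infty^+$; - $\mathcal{L}_2$: exactly one entry $-\infty^+$, the other in $\mathbb{R}^*\cup\{+\infty^-\}$; - $\mathcal{L}_3$: both entries in $\mathbb{R}^*$; - $\mathcal{L}_4$: exactly one entry $+\infty^-$, the other in $\mathbb{R}^*$; - $\mathcal{L}_5$: both entries $+\infty^-$. Define $\ell$ by $\ell=-\infty^-$ on $\mathcal{L}_1$, $\max\{s^\sigma,t^\tau\}$ on $\mathcal{L}_2$, $s^\sigma+t^\tau$ on $\mathcal{L}_3$, $\min\{s^\sigma,t^\tau\}$ on $\mathcal{L}_4$, and $+\infty^-$ on $\mathcal{L}_5$. Set $I\le_\ell J$ iff either $I\in\mathcal{L}_i$, $J\in\mathcal{L}_j$ with $i<j$, or $I,J$ lie in the same $\mathcal{L}_i$ and $\ell(I)\le_*\ell(J)$.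 *)

(* Defs.v *)
From HB Require Import structures.
From mathcomp Require Import all_boot all_order all_algebra.
From mathcomp Require Import reals.
Set Implicit Arguments. Unset Strict Implicit. Unset Printing Implicit Defensive.
Import Order.TTheory GRing.Theory Num.Theory.
Local Open Scope ring_scope.

Section Bipath.
Variable R : realType.

Inductive lab := L1 | L2.

Inductive B := Minf | Pinf | Pt of R & lab.

Definition lab_eqb (i j : lab) : bool :=
  match i, j with L1, L1 | L2, L2 => true | _, _ => false end.

Definition leB (x y : B) : bool :=
  match x, y with
  | Minf, _ => true
  | _, Pinf => true
  | Pt s i, Pt t j => lab_eqb i j && (s <= t)
  | _, _ => false
  end.

Definition comparableB (x y : B) : bool := leB x y || leB y x.

Definition convexB (I : pred B) : Prop :=
  forall x y z, I x -> I z -> leB x y -> leB y z -> I y.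

Definition connectedB (I : pred B) : Prop :=
  forall x y, I x -> I y ->
  exists (n : nat) (f : nat -> B), f 0%N = x /\ f n = y /\
    (forall i, (i <= n)%N -> I (f i)) /\
    (forall i, (i < n)%N -> comparableB (f i) (f i.+1)).

Definition is_interval (I : pred B) : Prop :=
  (exists x, I x) /\ convexB I /\ connectedB I.

Definition inL (I : pred B) : Prop :=
  is_interval I /\ ~ (forall b, I b) /\ I Minf.

(** Decorated numbers: an extended real with a decoration (true = +, false = -). *)
Inductive xreal := XNinf | XFin of R | XPinf.
Definition deco := (xreal * bool)%type.

Definition xlt (s t : xreal) : bool :=
  match s, t with
  | XNinf, XNinf => false
  | XNinf, _ => true
  | XFin a, XFin b => a < b
  | XFin _, XPinf => true
  | _, _ => false
  end.

Definition xeq (s t : xreal) : bool :=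
  match s, t with
  | XNinf, XNinf | XPinf, XPinf => true
  | XFin a, XFin b => a == b
  | _, _ => false
  end.

Definition le_star (p q : deco) : bool :=
  xlt p.1 q.1 || (xeq p.1 q.1 && (p.2 ==> q.2)).

Definition param_ok (p : deco) : bool :=
  match p with
  | (XFin _, _) => true
  | (XNinf, true) => true
  | (XPinf, false) => true
  | _ => false
  end.

Definition lint (s t : deco) : pred B := fun b =>
  match b with
  | Minf => true
  | Pinf => false
  | Pt r L1 => le_star (XFin r, true) t
  | Pt r L2 => le_star (XFin r, true) s
  end.

Definition kind (p : deco) : nat :=
  match p.1 with XNinf => 0 | XFin _ => 1 | XPinf => 2 end.

(** Index i of the class L_i containing <s,t>_L. *)
Definition Lclass (s t : deco) : nat :=
  match kind s, kind t with
  | 0, 0 => 1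
  | 0, _ | _, 0 => 2
  | 1, 1 => 3
  | 2, 2 => 5
  | _, _ => 4
  end%N.

Definition dmax (p q : deco) : deco := if le_star p q then q else p.
Definition dmin (p q : deco) : deco := if le_star p q then p else q.

Definition dadd (p q : deco) : deco :=
  match p.1, q.1 with
  | XFin a, XFin b => (XFin (a + b), p.2 && q.2)
  | _, _ => (XNinf, false) (* not used: only applied on L_3 *)
  end.

Definition ell (s t : deco) : deco :=
  match Lclass s t with
  | 1 => (XNinf, false)
  | 2 => dmax s t
  | 3 => dadd s t
  | 4 => dmin s t
  | _ => (XPinf, false)
  end%N.

Definition le_ell_param (s t s' t' : deco) : bool :=
  (Lclass s t < Lclass s' t')%N ||
  ((Lclass s t == Lclass s' t') && le_star (ell s t) (ell s' t')).

(** I <=_ell J, via the unique parametrisations of I, J in L. *)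
Definition le_ell (I J : pred B) : Prop :=
  exists s t s' t' : deco,
    [/\ param_ok s, param_ok t, param_ok s' & param_ok t'] /\
    I =1 lint s t /\ J =1 lint s' t' /\ le_ell_param s t s' t'.

Definition Lam (e : R) (b : B) : B :=
  match b with Pt r i => Pt (r + e) i | x => x end.

Lemma Lam_comp (e : R) (b : B) : Lam e (Lam e b) = Lam (e + e) b.
Proof. by case: b => //= r i; rewrite addrA. Qed.

Variable k : fieldType.

(** Pointwise finite-dimensional persistence modules over B:
    V_b = k^(pdim b) (row vectors), V(b,b') given by a matrix acting on the
    right (v |-> v *m pmap b b'); only relevant for b <= b'. *)
Record pmod := PMod {
  pdim : B -> nat;
  pmap : forall b b', 'M[k]_(pdim b, pdim b')
}.

Definition is_morph (V W : pmod) (f : forall b, 'M[k]_(pdim V b, pdim W b)) : Prop :=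
  forall b b', leB b b' -> pmap V b b' *m f b' = f b *m pmap W b b'.

Definition nonzero_morph_exists (V W : pmod) : Prop :=
  exists f : forall b, 'M[k]_(pdim V b, pdim W b),
    is_morph f /\ exists b, f b != 0.

Definition imod (I : pred B) : pmod :=
  @PMod (fun b => nat_of_bool (I b))
        (fun b b' => if I b && I b' then const_mx 1 else 0).

Definition shift (e : R) (V : pmod) : pmod :=
  @PMod (fun b => pdim V (Lam e b)) (fun b b' => pmap V (Lam e b) (Lam e b')).

(** Lambda_eps-interleaving.  The component of V_{0 -> 2 eps} at b is
    V(b, Lambda_{2eps} b) = V(b, Lambda_eps (Lambda_eps b)) (see Lam_comp). *)
Definition interleaved (e : R) (V W : pmod) : Prop :=
  exists (alpha : forall b, 'M[k]_(pdim V b, pdim W (Lam e b)))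
         (beta : forall b, 'M[k]_(pdim W b, pdim V (Lam e b))),
    @is_morph V (shift e W) alpha /\ @is_morph W (shift e V) beta /\
    (forall b, alpha b *m beta (Lam e b) = pmap V b (Lam e (Lam e b))) /\
    (forall b, beta b *m alpha (Lam e b) = pmap W b (Lam e (Lam e b))).

End Bipath.

(* Main.v *)
Require Import Defs.
From HB Require Import structures.
From mathcomp Require Import all_boot all_order all_algebra.
From mathcomp Require Import reals.
From mathcomp Require Import lra.
From Stdlib Require Import Classical.
Import Order.TTheory GRing.Theory Num.Theory.
Local Open Scope ring_scope.


Ltac crush := repeat match goal with
 | H : is_true false |- _ => done
 | H : is_true true |- _ => clear H
 | H : is_true (_ || _) |- _ => case/orP: H => H
 | H : is_true (_ && _) |- _ => let H' := fresh in case/andP: H => H H'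
 | H : is_true (~~ (_ || _)) |- _ => rewrite negb_or in H
 | H : is_true (~~ (_ && _)) |- _ => rewrite negb_and in H
 | H : is_true (~~ (_ < _)) |- _ => rewrite -leNgt in H
 | H : is_true (~~ (_ <= _)) |- _ => rewrite -ltNge in H
 | H : is_true (~~ (_ == _)) |- _ => rewrite neq_lt in H
 | H : is_true (_ == _) |- _ => move/eqP: H => H
 | H : is_true (~~ true) |- _ => done
 | H : is_true (~~ false) |- _ => clear H
 end.

Definition Qw {R : realType} (a c : deco R) (d : R) : bool :=
  match c.1, a.1 with
  | XNinf, _ => true
  | XFin w, XFin v => w - d <= v
  | XFin _, XPinf => true
  | XFin _, XNinf => false
  | XPinf, XPinf => true
  | XPinf, _ => false
  end.

Ltac brute := rewrite /le_ell_param /ell /Lclass /kind /dmax /dmin /dadd /le_star /xlt /xeq /Qw /=;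
  move=> *; apply/negP => H; crush; lra.

Lemma coreII (R : realType) (s t s' t' : deco R) (d u y : R) :
  param_ok s -> param_ok t -> param_ok s' -> param_ok t' ->
  0 <= d -> le_star (XFin u, true) t -> ~~ le_star (XFin y, true) t' ->
  y + d < u -> Qw s s' d -> ~~ le_ell_param s t s' t'.
Proof.
case: s => [[|x|] []] //; case: t => [[|x1|] []] //;
case: s' => [[|x2|] []] //; case: t' => [[|x3|] []] //; brute.
Qed.

Lemma coreII' (R : realType) (s t s' t' : deco R) (d u y : R) :
  param_ok s -> param_ok t -> param_ok s' -> param_ok t' ->
  0 <= d -> le_star (XFin u, true) s -> ~~ le_star (XFin y, true) s' ->
  y + d < u -> Qw t t' d -> ~~ le_ell_param s t s' t'.
Proof.
case: s => [[|x|] []] //; case: t => [[|x1|] []] //;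
case: s' => [[|x2|] []] //; case: t' => [[|x3|] []] //; brute.
Qed.

Lemma coreI (R : realType) (s t s' t' : deco R) (p q : R) :
  param_ok s -> param_ok t -> param_ok s' -> param_ok t' ->
  le_star (XFin p, true) s -> ~~ le_star (XFin p, true) s' ->
  le_star (XFin q, true) t -> ~~ le_star (XFin q, true) t' ->
  ~~ le_ell_param s t s' t'.
Proof.
case: s => [[|x|] []] //; case: t => [[|x1|] []] //;
case: s' => [[|x2|] []] //; case: t' => [[|x3|] []] //; brute.
Qed.

Lemma Qof (R : realType) (a c : deco R) (d : R) :
  param_ok a -> param_ok c ->
  (forall r, le_star (XFin (r + d), true) c -> le_star (XFin r, true) a) ->
  Qw a c d.
Proof.
case: a => [[|v|] []] //; case: c => [[|w|] []] //=; rewrite /Qw /le_star /xlt /xeq /=;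
  move=> _ _ H.
all: first [ done
  | (move: (H (w - d - 1)) => /implyP; rewrite implybE => Hi; crush; lra)
  | (rewrite leNgt; apply/negP => Hlt; move: (H ((v + (w - d)) / 2)) => /implyP; rewrite implybE => Hi; crush; lra)
  | (move: (H (v + 1)) => /implyP; rewrite implybE => Hi; crush; lra)
  | (move: (H 0) => /implyP; rewrite implybE => Hi; crush; lra)
  | idtac ].
Qed.


Lemma ord_true {X : bool} (i : 'I_(nat_of_bool X)) : X.
Proof. by case: X i => // -[]. Qed.

Definition ordT {X : bool} (H : X) : 'I_(nat_of_bool X).
Proof. apply: (@Ordinal _ 0); by rewrite H. Defined.

Lemma sum_single {k : fieldType} {n : nat} {F : 'I_n -> k} (i0 : 'I_n) :
  (n <= 1)%N -> \sum_(l < n) F l = F i0.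
Proof.
move=> Hn; rewrite (bigD1 i0) //= big1 ?addr0 // => l Hl.
case/negP: Hl; apply/eqP/val_inj => /=.
move: (leq_trans (ltn_ord l) Hn) (leq_trans (ltn_ord i0) Hn); rewrite !ltnS !leqn0 => /eqP -> /eqP ->.
by [].
Qed.

Lemma if_entry (k : fieldType) (c : bool) m n (i : 'I_m) (j : 'I_n) :
  (if c then const_mx 1 else 0 : 'M[k]_(m, n)) i j = (nat_of_bool c)%:R.
Proof. by case: c; rewrite mxE. Qed.

Lemma mx_nz (k : fieldType) m n (A : 'M[k]_(m, n)) : A != 0 -> exists i j, A i j != 0.
Proof.
move=> H; case: (pickP (fun ij : 'I_m * 'I_n => A ij.1 ij.2 != 0)) => [[i j] /= Hij | H0].
  by exists i, j.
case/eqP: H; apply/matrixP => i j; rewrite mxE; apply/eqP.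
by have := H0 (i, j); move/negbFE.
Qed.

Lemma leB_Lam {R : realType} (e : R) {x y} : leB x y -> leB (Lam e x) (Lam e y).
Proof.
case: x y => [||r i] [||r' j] //=; by case/andP => -> ?; rewrite lerD2r.
Qed.

Lemma interl (R : realType) (k : fieldType) (V W : pred (B R)) (e : R) :
 (forall x y, leB x y -> V y -> V x) -> (forall x y, leB x y -> W y -> W x) ->
 (forall b, W (Lam e b) -> V b) -> (forall b, V (Lam e b) -> W b) ->
 interleaved e (imod k V) (imod k W).
Proof.
move=> dV dW hWV hVW.
exists (fun b => const_mx 1), (fun b => const_mx 1).
split; [|split; [|split]].
- move=> b b' le; apply/matrixP => i j; rewrite !mxE.
  under eq_bigr => l _ do rewrite mxE if_entry mulr1.
  under [RHS]eq_bigr => l _ do rewrite mxE if_entry mul1r.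
  rewrite !sumr_const !card_ord.
  have Vb := ord_true i; have Wb' := ord_true j.
  have Vb' := hWV _ Wb'.
  have Wb := dW _ _ (leB_Lam e le) Wb'.
  by rewrite /= Vb Vb' Wb Wb'.
- move=> b b' le; apply/matrixP => i j; rewrite !mxE.
  under eq_bigr => l _ do rewrite mxE if_entry mulr1.
  under [RHS]eq_bigr => l _ do rewrite mxE if_entry mul1r.
  rewrite !sumr_const !card_ord.
  have Wb := ord_true i; have Vb' := ord_true j.
  have Wb' := hVW _ Vb'.
  have Vb := dV _ _ (leB_Lam e le) Vb'.
  by rewrite /= Vb Vb' Wb Wb'.
- move=> b; apply/matrixP => i j; rewrite !mxE.
  under eq_bigr => l _ do rewrite !mxE mulr1.
  rewrite sumr_const card_ord if_entry.
  have Vb := ord_true i; have Vb2 := ord_true j.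
  by rewrite /= Vb Vb2 (hVW _ Vb2).
- move=> b; apply/matrixP => i j; rewrite !mxE.
  under eq_bigr => l _ do rewrite !mxE mulr1.
  rewrite sumr_const card_ord if_entry.
  have Wb := ord_true i; have Wb2 := ord_true j.
  by rewrite /= Wb Wb2 (hWV _ Wb2).
Qed.

Lemma morph_incl (R : realType) (k : fieldType) (I J : pred (B R)) (e : R) :
  I (Minf R) -> J (Minf R) -> nonzero_morph_exists (imod k I) (shift e (imod k J)) ->
  forall b, J (Lam e b) -> I b.
Proof.
move=> IM JM [f [Hf [b0 /mx_nz [i [j Hij]]]]] b Jb.
case Ib: (I b) => //.
have Ib0 := ord_true i.
pose i' : 'I_(pdim (imod k I) (Minf R)) := ordT IM.
pose l0 : 'I_(pdim (shift e (imod k J)) (Minf R)) := ordT JM.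
pose jb : 'I_(pdim (shift e (imod k J)) b) := ordT Jb.
have /matrixP/(_ i' jb) E1 := Hf (Minf R) b isT.
move: E1; rewrite /= !mxE big1; last first.
  by move=> l _; exfalso; move: (ord_true l); rewrite Ib.
under eq_bigr => l _ do rewrite if_entry.
have c1 : (nat_of_bool (J (Minf R) && J (Lam e b)))%:R = 1 :> k by rewrite JM Jb.
rewrite (sum_single l0) ?leq_b1 // c1 mulr1 => F0.
have /matrixP/(_ i' j) E2 := Hf (Minf R) b0 isT.
move: E2; rewrite /= !mxE.
under eq_bigr => l _ do rewrite if_entry.
under [X in _ = X -> _]eq_bigr => l _ do rewrite if_entry.
have c2 : (nat_of_bool (I (Minf R) && I b0))%:R = 1 :> k by rewrite IM Ib0.
rewrite (sum_single i) ?leq_b1 // (sum_single l0) ?leq_b1 // -F0 mul0r c2 mul1r => E.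
by move: Hij; rewrite E eqxx.
Qed.


Lemma down {R : realType} {I : pred (B R)} : inL I -> forall x y, leB x y -> I y -> I x.
Proof. case=> [[_ [cv _]] [_ IM]] x y lxy Iy; exact: (cv (Minf R) x y IM Iy isT lxy). Qed.

Lemma noPinf {R : realType} {I : pred (B R)} : inL I -> ~ I (Pinf R).
Proof.
case=> [[_ [cv _]] [Hn IM]] IP; apply: Hn => b.
by apply: (cv (Minf R) b (Pinf R) IM IP isT); case: b.
Qed.

Theorem lemma4p14 (R : realType) (k : fieldType) (IR IS IT : pred (B R)) (e : R) :
  inL IR -> inL IS -> inL IT -> le_ell IR IT -> 0 <= e ->
  nonzero_morph_exists (imod k IR) (shift e (imod k IS)) ->
  nonzero_morph_exists (imod k IS) (shift e (imod k IT)) ->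
  interleaved e (imod k IS) (imod k IR) \/ interleaved e (imod k IS) (imod k IT).
Proof.
move=> hR hS hT [s [t [s' [t' [[ps pt ps' pt'] [ER [ET Hle]]]]]]] he m1 m2.
have inc1 := @morph_incl R k IR IS e hR.2.2 hS.2.2 m1.
have inc2 := @morph_incl R k IS IT e hS.2.2 hT.2.2 m2.
have dS := down hS.
have R1 r : IR (Pt r L1) = le_star (XFin r, true) t := ER (Pt r L1).
have R2 r : IR (Pt r L2) = le_star (XFin r, true) s := ER (Pt r L2).
have T1 r : IT (Pt r L1) = le_star (XFin r, true) t' := ET (Pt r L1).
have T2 r : IT (Pt r L2) = le_star (XFin r, true) s' := ET (Pt r L2).
destruct (classic (forall b, IR (Lam e b) -> IS b)) as [H1|H1].
  by left; apply: interl; [exact: dS | exact: down hR | exact: H1 | exact: inc1].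
destruct (classic (forall b, IS (Lam e b) -> IT b)) as [H2|H2].
  by right; apply: interl; [exact: dS | exact: down hT | exact: inc2 | exact: H2].
exfalso.
have [b Hb] := not_all_ex_not _ _ H1.
have [Rb nSb] := imply_to_and _ _ Hb.
have [b' Hb'] := not_all_ex_not _ _ H2.
have [Sb' nTb'] := imply_to_and _ _ Hb'.
move: Hle; apply/negP.
clear Hb Hb'.
case: b Rb nSb => [||x i] Rb nSb.
  by case: nSb; exact: hS.2.2.
  by case: (noPinf hR).
case: b' Sb' nTb' => [||y j] Sb' nTb'.
  by case: nTb'; exact: hT.2.2.
  by case: (noPinf hS).
have gap : forall l, IS (Pt (y + e) l) -> ~ IS (Pt x l) -> y + e < x.
  move=> l Sy nSx; rewrite ltNge; apply/negP => lxy; apply: nSx.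
  by apply: (dS _ (Pt (y + e) l)) => //=; rewrite /lab_eqb; case: l {Sy}.
have chain : forall l r, IT (Pt (r + (e + e)) l) -> IR (Pt r l).
  move=> l r; rewrite addrA => H; apply: (inc1 (Pt r l)); exact: (inc2 (Pt (r + e) l)).
case: i Rb nSb => /= Rb nSb; case: j Sb' nTb' => /= Sb' nTb'.
- apply: (@coreII R s t s' t' (e + e) (x + e) y) => //.
  + lra.
  + by move: Rb; rewrite R1.
  + by apply/negP => H; apply: nTb'; rewrite T1.
  + have := gap _ Sb' nSb; lra.
  + apply: Qof => // r H; move: (chain L2 r); rewrite R2 T2; exact.
- apply: (@coreI R s t s' t' y (x + e)) => //.
  + by move: (inc1 (Pt y L2) Sb'); rewrite R2.
  + by apply/negP => H; apply: nTb'; rewrite T2.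
  + by move: Rb; rewrite R1.
  + apply/negP => H; apply: nSb; apply: (inc2 (Pt x L1)); by rewrite /= T1.
- apply: (@coreI R s t s' t' (x + e) y) => //.
  + by move: Rb; rewrite R2.
  + apply/negP => H; apply: nSb; apply: (inc2 (Pt x L2)); by rewrite /= T2.
  + by move: (inc1 (Pt y L1) Sb'); rewrite R1.
  + by apply/negP => H; apply: nTb'; rewrite T1.
- apply: (@coreII' R s t s' t' (e + e) (x + e) y) => //.
  + lra.
  + by move: Rb; rewrite R2.
  + by apply/negP => H; apply: nTb'; rewrite T2.
  + have := gap _ Sb' nSb; lra.
  + apply: Qof => // r H; move: (chain L1 r); rewrite R1 T1; exact.
Qed.
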